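(* Let $n$ be a positive integer and $q=p^k$ a prime power with $k\ge2$. Then there are at least $p^k(p-1)^k/2^k-q$ intervals $L\subseteq[q-1]$ such that every $q$-modular $L$-differencing Sperner system $\mathcal{F}\subseteq2^{[n]}$ satisfies $$|\mathcal{F}|\le\sum_{i=0}^{|L|}\binom{n-1}{i}.$$
   Context: An interval is a nonempty set of consecutive integers. For $L\subseteq[q-1]$, $\mathcal{F}\subseteq2^{[n]}$ is $q$-modular $L$-differencing Sperner if for all distinct $A,B\in\mathcal{F}$, $|A\setminus B|\equiv\ell\pmod q$ for some $\ell\in L$. *)

(* Defs.v *)
From mathcomp Require Import all_boot all_order all_algebra.
Set Implicit Arguments. Unset Strict Implicit. Unset Printing Implicit Defensive.

(* Ground set [n] = {1,..,n} is represented by 'I_n; residues [q-1] = {1,..,q-1}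
   are the nonzero elements of 'I_q. *)

Definition diff_sperner (q n : nat) (L : {set 'I_q}) (F : {set {set 'I_n}}) : bool :=
  [forall A in F, forall B in F,
     (A != B) ==> [exists l in L, #|A :\: B| %% q == (nat_of_ord l) %% q]].

Definition is_interval_in (q : nat) (L : {set 'I_q}) : bool :=
  [exists a : 'I_q, exists b : 'I_q,
     (0 < nat_of_ord a <= nat_of_ord b) &&
     (L == [set i : 'I_q | nat_of_ord a <= nat_of_ord i <= nat_of_ord b])].

Definition good_bound (q n : nat) (L : {set 'I_q}) : bool :=
  [forall F : {set {set 'I_n}},
     diff_sperner L F ==> (#|F| <= \sum_(i < #|L|.+1) 'C(n.-1, i))].

(* Main.v *)
Require Import Defs.
From mathcomp Require Import all_boot all_order all_algebra.
Import Order.TTheory GRing.Theory Num.Theory.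
From mathcomp Require Import zify.
Set Implicit Arguments. Unset Strict Implicit. Unset Printing Implicit Defensive.

Lemma dvd_bin_q p k s j : prime p -> 0 < j < p ^ k -> p %| 'C(s * p ^ k, j).
Proof.
move=> pp; case: j => [//|j] /andP[_ jq].
have key := mul_bin_diag (s * p ^ k) j.
apply/negPn/negP => nd.
have : p ^ k %| j.+1 * 'C(s * p ^ k, j.+1).
  by rewrite -key; apply: dvdn_mulr; apply: dvdn_mull.
rewrite Gauss_dvdl; last by apply: coprimeXl; rewrite prime_coprime.
by move/dvdn_leq => /(_ isT); rewrite leqNgt jq.
Qed.

Lemma P1 p k t r m : prime p -> r < m -> m < p ^ k -> p %| 'C(t * p ^ k + r, m).
Proof.
move=> pp rm mq; rewrite -binomial.Vandermonde; apply: dvdn_sum => i _.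
case: (posnP i) => [->|i0].
  by rewrite subn0 (bin_small rm) muln0 dvdn0.
apply: dvdn_mulr; apply: dvd_bin_q => //.
by rewrite i0 (leq_ltn_trans _ mq) // -ltnS ltn_ord.
Qed.

Lemma nd_fact p c : prime p -> c < p -> ~~ (p %| c`!).
Proof.
move=> pp; elim: c => [|c IH] cp; first by rewrite dvdn1; have := prime_gt1 pp; lia.
rewrite factS Euclid_dvdM // negb_or IH ?(ltnW cp) // andbT.
by apply/negP => /(dvdn_leq (ltn0Sn c)); rewrite leqNgt cp.
Qed.

Lemma nd_bin_small p c d : prime p -> d <= c < p -> ~~ (p %| 'C(c, d)).
Proof.
move=> pp /andP[dc cp]; apply/negP => H.
have := nd_fact pp cp; rewrite -(bin_fact dc).
by rewrite dvdn_mulr.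
Qed.

Lemma lucas_step p n m : prime p ->
  'C(n + p, m) = 'C(n, m) + (if p <= m then 'C(n, m - p) else 0) %[mod p].
Proof.
move=> pp; rewrite addnC -binomial.Vandermonde -modn_summ.
rewrite (eq_bigr (fun j : 'I_m.+1 =>
   (((j == 0 :> nat) * 'C(n, m - j) + (j == p :> nat) * 'C(n, m - j)) %% p))); last first.
  move=> j _; case: (ltngtP j p) => jp.
  - case: (posnP j) => [j0|j0].
      by rewrite j0 bin0 /= mul1n mul0n addn0.
    rewrite /= !mul0n addn0 mod0n.
    by apply/eqP; rewrite -/(dvdn _ _) dvdn_mulr // prime_dvd_bin // j0.
  - by rewrite bin_small // (gtn_eqF (leq_ltn_trans (leq0n _) jp)).
  - by rewrite jp binn mul1n (gtn_eqF (prime_gt0 pp)) mul0n.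
rewrite modn_summ big_split /=.
rewrite big_ord_recl /= mul1n subn0 big1 ?addn0; last first.
  by move=> i _; rewrite /bump /= mul0n.
congr (_ %% p); congr (_ + _).
case: ifP => pm.
  have pm' : p < m.+1 by [].
  rewrite (bigD1 (Ordinal pm')) //= eqxx mul1n big1 ?addn0 // => i ni.
  by rewrite -(inj_eq val_inj) /= in ni; rewrite (negbTE ni).
by apply: big1 => i _; case: eqP => //= ip; have := ltn_ord i; rewrite ip ltnS pm.
Qed.

Lemma lucas p c' d' c0 d0 : prime p -> c0 < p -> d0 < p ->
  'C(c' * p + c0, d' * p + d0) = 'C(c', d') * 'C(c0, d0) %[mod p].
Proof.
move=> pp c0p d0p; elim: c' d' => [|c IH] d'.
  case: d' => [|d']; first by rewrite !mul0n !add0n bin0 mul1n.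
  rewrite mul0n add0n bin_small ?bin0n ?mul0n //.
  by rewrite mulSn; lia.
have -> : c.+1 * p + c0 = (c * p + c0) + p by rewrite mulSnr; lia.
rewrite lucas_step //.
case: d' => [|d'].
  have := IH 0; rewrite !mul0n !add0n leqNgt d0p addn0 !bin0 => ->.
  by [].
have -> : (p <= d'.+1 * p + d0) = true by rewrite mulSnr; lia.
have -> : d'.+1 * p + d0 - p = d' * p + d0 by rewrite mulSnr; lia.
by rewrite -modnDm !IH modnDm -mulnDl binS.
Qed.

Definition Qb p c d := ~~ (p %| 'C(c, d)).

Lemma Q_lucas p c' d' c0 d0 : prime p -> c0 < p -> d0 < p ->
  Qb p (c' * p + c0) (d' * p + d0) = Qb p c' d' && Qb p c0 d0.
Proof.
move=> pp c0p d0p; rewrite /Qb /dvdn lucas // -/(dvdn _ _) Euclid_dvdM //.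
by rewrite negb_or.
Qed.

Lemma sum_split (F : nat -> nat) M p :
  \sum_(0 <= i < M * p) F i = \sum_(0 <= i < M) \sum_(0 <= j < p) F (i * p + j).
Proof.
elim: M => [|M IH]; first by rewrite mul0n !big_geq.
rewrite mulSnr big_nat_recr //= -IH (big_cat_nat (leq0n (M * p)) (leq_addr p (M * p))) /=.
congr (_ + _).
rewrite -{1}(add0n (M * p)) big_addn addKn.
by apply: eq_bigr => j _; rewrite addnC.
Qed.

Definition cnt p k := \sum_(0 <= c < p ^ k) \sum_(0 <= d < p ^ k) Qb p c d.

Lemma cnt_S p k : prime p -> cnt p k.+1 = cnt p k * cnt p 1.
Proof.
move=> pp; rewrite /cnt expnSr expn1 sum_split big_distrlr.
apply: eq_bigr => c' _; apply: eq_big_nat => c0 /andP[_ c0p].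
rewrite sum_split big_distrlr.
apply: eq_bigr => d' _; apply: eq_big_nat => d0 /andP[_ d0p].
by rewrite Q_lucas // -mulnb.
Qed.

Lemma cnt1 p : prime p -> 'C(p, 2) <= cnt p 1.
Proof.
move=> pp; rewrite /cnt expn1 -bin2_sum.
rewrite big_nat_cond [X in _ <= X]big_nat_cond; apply: leq_sum => c /andP[/andP[_ cp] _].
rewrite (big_cat_nat (leq0n c) (ltnW cp)) /=.
apply: leq_trans (leq_addr _ _).
have {1}-> : c = \sum_(0 <= d < c) 1 by rewrite sum_nat_const_nat subn0 muln1.
rewrite big_nat_cond [X in _ <= X]big_nat_cond; apply: leq_sum => d /andP[/andP[_ dc] _].
by rewrite /Qb nd_bin_small // (ltnW dc) cp.
Qed.

Lemma cnt_lb p k : prime p -> 'C(p, 2) ^ k <= cnt p k.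
Proof.
move=> pp; elim: k => [|k IH].
  rewrite /cnt expn0 !big_nat1 /Qb bin0 dvdn1.
  by have := prime_gt1 pp; case: eqP => // ->.
by rewrite cnt_S // expnSr leq_mul // cnt1.
Qed.

Local Open Scope ring_scope.

Section RB.
Variables (p n' d c : nat) (F : {set {set 'I_n'.+1}}).
Hypothesis pp : prime p.

Definition S0 := [set~ (@ord_max n')].
Definition Tset := [set T : {set 'I_n'.+1} | (T \subset S0) && (#|T| <= d)%N].

Definition evF (j : 'I_#|F|) : {set 'I_n'.+1} := enum_val j.
Definition evT (t : 'I_#|Tset|) : {set 'I_n'.+1} := enum_val t.

Definition Ymx : 'M['F_p]_(#|Tset|, #|F|) :=
  \matrix_(t, j) ((evT t \subset evF j)%:R).

Definition inV (f : {set 'I_n'.+1} -> 'F_p) : Prop :=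
  (\row_j f (evF j) <= Ymx)%MS.

Lemma inV_ext f g : (forall B, f B = g B) -> inV f -> inV g.
Proof.
move=> fg; rewrite /inV; congr (_ <= _)%MS.
by apply/rowP => j; rewrite !mxE fg.
Qed.

Lemma inV_basic T : T \in Tset -> inV (fun B => (T \subset B)%:R).
Proof.
move=> HT; rewrite /inV.
have -> : \row_j ((T \subset evF j)%:R : 'F_p) = row (enum_rank_in HT T) Ymx.
  by apply/rowP => j; rewrite !mxE /evT enum_rankK_in.
exact: row_sub.
Qed.

Lemma inV_add f g : inV f -> inV g -> inV (fun B => f B + g B).
Proof.
move=> hf hg; rewrite /inV.
have -> : \row_j (f (evF j) + g (evF j)) =
   \row_j f (evF j) + \row_j g (evF j).
  by apply/rowP => j; rewrite !mxE.
exact: addmx_sub.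
Qed.

Lemma inV_scale a f : inV f -> inV (fun B => a * f B).
Proof.
move=> hf; rewrite /inV.
have -> : \row_j (a * f (evF j)) = a *: \row_j f (evF j).
  by apply/rowP => j; rewrite !mxE.
exact: scalemx_sub.
Qed.

Lemma inV_sum (I : finType) (P : pred I) (f : I -> {set 'I_n'.+1} -> 'F_p) :
  (forall i, P i -> inV (f i)) -> inV (fun B => \sum_(i | P i) f i B).
Proof.
move=> hf; rewrite /inV.
have -> : \row_j (\sum_(i | P i) f i (evF j)) =
   \sum_(i | P i) \row_j f i (evF j).
  by apply/rowP => j; rewrite !mxE summxE; apply: eq_bigr => i _; rewrite mxE.
exact: summx_sub.
Qed.

Lemma disjU1 (x : 'I_n'.+1) (W B : {set 'I_n'.+1}) :
  [disjoint x |: W & B] = (x \notin B) && [disjoint W & B].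
Proof.
by rewrite (@eq_disjoint _ _ (predU1 x (mem W))) ?disjointU1 // => y; rewrite !inE.
Qed.

Lemma disj0 (B : {set 'I_n'.+1}) : [disjoint set0 & B].
Proof. by rewrite -setI_eq0 set0I. Qed.

Lemma inV_disj w : forall W U : {set 'I_n'.+1}, #|W| = w -> U :|: W \subset S0 ->
  (#|U| + #|W| <= d)%N ->
  inV (fun B => ((U \subset B) && [disjoint W & B])%:R).
Proof.
elim: w => [|w IH] W U cW sUW cUW.
  move/eqP: cW; rewrite cards_eq0 => /eqP ->.
  apply: (@inV_ext (fun B : {set 'I_n'.+1} => (U \subset B)%:R)).
    by move=> B; rewrite disj0 andbT.
  apply: inV_basic; rewrite inE (subset_trans (subsetUl U W) sUW) /=.
  by rewrite (leq_trans _ cUW) // leq_addr.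
have : (0 < #|W|)%N by rewrite cW.
case/card_gt0P => x xW.
set W' := W :\ x.
have cW' : #|W'| = w by apply/eqP; rewrite -eqSS -cW (cardsD1 x W) xW.
pose f1 (B : {set 'I_n'.+1}) := (((U \subset B) && [disjoint W' & B])%:R : 'F_p).
pose f2 (B : {set 'I_n'.+1}) := ((((x |: U) \subset B) && [disjoint W' & B])%:R : 'F_p).
apply: (@inV_ext (fun B : {set 'I_n'.+1} => f1 B + (-1) * f2 B)).
  move=> B; rewrite /f1 /f2.
  have -> : [disjoint W & B] = (x \notin B) && [disjoint W' & B].
    by rewrite -[in LHS](setD1K xW) disjU1.
  rewrite subUset sub1set.
  by case: (x \in B); case: (U \subset B); case: [disjoint W' & B] => /=;
     rewrite ?mulr0n ?mulr1n ?mulr0 ?addr0 ?mulN1r ?subrr.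
apply: inV_add; first apply: IH => //.
- by apply: subset_trans sUW; rewrite setUS // subD1set.
- by rewrite cW'; apply: leq_trans cUW; rewrite cW leq_add2l.
apply: inV_scale; apply: IH => //.
- apply: subset_trans sUW; rewrite -setUA subUset; apply/andP; split.
    by rewrite sub1set !inE xW orbT.
  by rewrite setUS // subD1set.
- rewrite cardsU1 cW'; move: cUW; rewrite cW.
  by case: (x \notin U) => /= H; lia.
Qed.


Lemma inV_binD (X : {set 'I_n'.+1}) j : X \subset S0 -> (j <= d)%N ->
  inV (fun B => ('C(#|X :\: B|, j))%:R).
Proof.
move=> sX jd.
apply: (@inV_ext (fun B : {set 'I_n'.+1} => \sum_(T : {set 'I_n'.+1} | (T \subset X) && (#|T| == j))
   (((set0 \subset B) && [disjoint T & B])%:R : 'F_p))).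
  move=> B; rewrite -natr_sum; congr (_%:R).
  rewrite -cards_draws -sum1_card big_mkcond [RHS]big_mkcond /=.
  apply: eq_bigr => T _; rewrite inE subsetD sub0set /=.
  by case: (T \subset X); case: (#|T| == j); case: [disjoint T & B].
apply: inV_sum => T /andP[sTX /eqP cT].
apply: (@inV_disj _ T set0 (erefl _)).
  by rewrite set0U (subset_trans sTX).
by rewrite cards0 cT.
Qed.

Lemma inV_binI (X : {set 'I_n'.+1}) j : X \subset S0 -> (j <= d)%N ->
  inV (fun B => ('C(#|X :&: B|, j))%:R).
Proof.
move=> sX jd.
apply: (@inV_ext (fun B : {set 'I_n'.+1} => \sum_(T : {set 'I_n'.+1} | (T \subset X) && (#|T| == j))
   (((T \subset B) && [disjoint set0 & B])%:R : 'F_p))).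
  move=> B; rewrite -natr_sum; congr (_%:R).
  rewrite -cards_draws -sum1_card big_mkcond [RHS]big_mkcond /=.
  apply: eq_bigr => T _; rewrite inE subsetI disj0 /=.
  by case: (T \subset X); case: (#|T| == j); case: (T \subset B).
apply: inV_sum => T /andP[sTX /eqP cT].
apply: (@inV_disj _ set0 T); first by rewrite cards0.
  by rewrite setU0 (subset_trans sTX).
by rewrite cards0 cT addn0.
Qed.

Lemma inV_gD (X : {set 'I_n'.+1}) : X \subset S0 ->
  inV (fun B => ('C(#|X :\: B| + c, d))%:R).
Proof.
move=> sX.
apply: (@inV_ext (fun B : {set 'I_n'.+1} => \sum_(j < d.+1) ('C(c, d - j))%:R * ('C(#|X :\: B|, j))%:R)).
  move=> B; rewrite -binomial.Vandermonde natr_sum; apply: eq_bigr => j _.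
  by rewrite natrM mulrC.
apply: inV_sum => j _; apply: inV_scale; apply: inV_binD => //.
by rewrite -ltnS ltn_ord.
Qed.

Lemma inV_gI (X : {set 'I_n'.+1}) : X \subset S0 ->
  inV (fun B => ('C(#|X :&: B| + c, d))%:R).
Proof.
move=> sX.
apply: (@inV_ext (fun B : {set 'I_n'.+1} => \sum_(j < d.+1) ('C(c, d - j))%:R * ('C(#|X :&: B|, j))%:R)).
  move=> B; rewrite -binomial.Vandermonde natr_sum; apply: eq_bigr => j _.
  by rewrite natrM mulrC.
apply: inV_sum => j _; apply: inV_scale; apply: inV_binI => //.
by rewrite -ltnS ltn_ord.
Qed.

Lemma rank_bound : ~~ (p %| 'C(c, d))%N ->
  (forall A B, A \in F -> B \in F -> A != B -> (p %| 'C(#|A :\: B| + c, d))%N) ->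
  (#|F| <= #|Tset|)%N.
Proof.
move=> g0 Hoff.
pose h (A B : {set 'I_n'.+1}) : 'F_p := if ord_max \in A
  then ('C(#|(~: A) :&: B| + c, d))%:R else ('C(#|A :\: B| + c, d))%:R.
pose M : 'M['F_p]_#|F| := \matrix_(i, j) h (evF i) (evF j).
have sub : (M <= Ymx)%MS.
  apply/row_subP => i.
  have -> : row i M = \row_j h (evF i) (evF j).
    by apply/rowP => j; rewrite !mxE.
  rewrite /h; case Hm: (@ord_max n' \in evF i).
    apply: (@inV_gI (~: evF i)).
    by rewrite /S0 setCS sub1set.
  apply: (@inV_gD (evF i)).
  by rewrite /S0 subsetC sub1set inE Hm.
have eqM : M = ('C(c, d)%:R : 'F_p)%:M.
  apply/matrixP => i j; rewrite !mxE; case: eqP => [<-|/eqP ij].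
    rewrite /h setDv setIC setICr !cards0 add0n mulr1n.
    by case: ifP.
  have Ai : evF i \in F := enum_valP i.
  have Aj : evF j \in F := enum_valP j.
  have neq : evF i != evF j.
    by apply: contra ij => /eqP /enum_val_inj ->.
  rewrite mulr0n /h; case: ifP => _; apply/eqP; rewrite -(dvdn_pcharf (pchar_Fp pp)).
    rewrite setIC -setDE; apply: Hoff => //; by rewrite eq_sym.
  exact: Hoff.
have := mxrankS sub.
rewrite eqM -scalemx1 mxrank_scale_nz ?mxrank1.
  by move=> H; apply: leq_trans H (rank_leq_row _).
by rewrite -(dvdn_pcharf (pchar_Fp pp)).
Qed.

End RB.

Lemma card_S0 n' : #|S0 n'| = n'.
Proof. by rewrite /S0 cardsC1 card_ord. Qed.

Lemma card_Tset n' d : #|Tset n' d| = (\sum_(i < d.+1) 'C(n', i))%N.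
Proof.
elim: d => [|d IH].
  rewrite big_ord_recl big_ord0 addn0 -[in RHS](card_S0 n') -cards_draws.
  by apply: eq_card => T; rewrite !inE leqn0.
rewrite big_ord_recr /= -IH -(cardsID (Tset n' d) (Tset n' d.+1)).
congr (_ + _).
  apply: eq_card => T; rewrite !inE.
  case: (T \subset S0 n') => //=.
  by case H: (#|T| <= d)%N; rewrite ?andbT ?andbF // (leq_trans H).
rewrite -[in RHS](card_S0 n') -cards_draws; apply: eq_card => T; rewrite !inE.
case: (T \subset S0 n'); rewrite ?andbT ?andbF //=.
by rewrite -ltnNge eqn_leq andbC.
Qed.

Local Close Scope ring_scope.

Definition ival q c d : {set 'I_q} :=
  [set i : 'I_q | (q - c <= i) && (i <= q - c + d - 1)].

Lemma sum_range a b n : a + b <= n ->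
  \sum_(0 <= i < n) ((a <= i) && (i < a + b) : nat) = b.
Proof.
move=> H.
rewrite (big_cat_nat (leq0n a) (leq_trans (leq_addr b a) H)) /=.
rewrite (big_cat_nat (leq_addr b a) H) /=.
have h1 : \sum_(0 <= i < a) ((a <= i) && (i < a + b) : nat) = 0.
  rewrite big_nat_cond big1 // => i /andP[/andP[u1 u2] _].
  by case: andP => // -[u3 u4]; lia.
have h3 : \sum_(a + b <= i < n) ((a <= i) && (i < a + b) : nat) = 0.
  rewrite big_nat_cond big1 // => i /andP[/andP[u1 u2] _].
  by case: andP => // -[u3 u4]; lia.
have h2 : \sum_(a <= i < a + b) ((a <= i) && (i < a + b) : nat) = b.
  rewrite (eq_big_nat _ _ (F2 := fun=> 1)); last by move=> i /andP[-> ->].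
  by rewrite sum_nat_const_nat muln1 addKn.
by rewrite h1 h2 h3 addn0.
Qed.

Lemma card_ival q c d : c < q -> 0 < d <= c -> #|ival q c d| = d.
Proof.
move=> cq /andP[d0 dc].
rewrite -sum1_card big_mkcond /=.
rewrite (eq_bigr (fun i : 'I_q => ((q - c <= i) && (i < q - c + d) : nat))); last first.
  move=> i _; rewrite inE.
  have -> : (i <= q - c + d - 1) = (i < q - c + d) by lia.
  by case: ifP.
rewrite -(big_mkord xpredT (fun i => ((q - c <= i) && (i < q - c + d) : nat))).
apply: sum_range; lia.
Qed.

Lemma ival_interval q c d : c < q -> 0 < d <= c -> is_interval_in (ival q c d).
Proof.
move=> cq /andP[d0 dc].
have ha : q - c < q by lia.
have hb : q - c + d - 1 < q by lia.
apply/existsP; exists (Ordinal ha); apply/existsP; exists (Ordinal hb).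
rewrite /= eqxx andbT; apply/andP; split; lia.
Qed.

Lemma ival_good p k n c d : prime p -> 0 < n -> c < p ^ k -> 0 < d <= c ->
  Qb p c d -> good_bound n (ival (p ^ k) c d).
Proof.
move=> pp; case: n => [//|n'] _ cq dH g0.
apply/forallP => F; apply/implyP => HF.
rewrite card_ival // -card_Tset.
apply: (rank_bound pp g0) => A B HA HB neq.
move/forallP: HF => /(_ A); rewrite HA /= => /forallP /(_ B).
rewrite HB neq /= => /existsP [l /andP[lL /eqP hl]].
rewrite /ival inE in lL.
rewrite (modn_small (ltn_ord l)) in hl.
set x := #|A :\: B| in hl *.
have -> : x + c = (x %/ p ^ k + 1) * p ^ k + (l - (p ^ k - c)).
  rewrite {1}(divn_eq x (p ^ k)) hl mulnDl mul1n.
  move: lL cq; lia.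
apply: P1 => //; move: lL dH cq; lia.
Qed.

Lemma count_P p k n : prime p -> 0 < n ->
  \sum_(0 <= c < p ^ k) \sum_(0 <= d < p ^ k) (Qb p c d && (0 < d) : nat)
  <= #|[set L : {set 'I_(p ^ k)} | is_interval_in L && good_bound n L]|.
Proof.
move=> pp n0.
set q := p ^ k.
pose P := [set x : 'I_q * 'I_q | Qb p x.1 x.2 && (0 < x.2)].
have -> : \sum_(0 <= c < q) \sum_(0 <= d < q) (Qb p c d && (0 < d) : nat) = #|P|.
  have -> : #|P| = \sum_(x : 'I_q * 'I_q) (Qb p x.1 x.2 && (0 < x.2) : nat).
    rewrite -sum1_card [LHS]big_mkcond /=; apply: eq_bigr => x _.
    by rewrite inE; case: ifP.
  rewrite -(pair_big xpredT xpredT (fun i j : 'I_q => (Qb p i j && (0 < j) : nat))) /=.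
  rewrite -(big_mkord xpredT (fun i => \sum_(j < q) (Qb p i j && (0 < j) : nat))).
  apply: eq_bigr => i _.
  by rewrite -(big_mkord xpredT (fun j => (Qb p i j && (0 < j) : nat))).
pose f := fun x : 'I_q * 'I_q => ival q x.1 x.2.
have dc : forall x, x \in P -> 0 < x.2 <= x.1.
  move=> x; rewrite inE => /andP[Q d0]; rewrite d0 /=.
  rewrite -bin_gt0 lt0n; apply: contra Q => /eqP ->; by rewrite /Qb dvdn0.
have inj : {in P &, injective f}.
  move=> [c d] [c' d'] Hx Hy /= fe.
  have /andP[d0 dlc] := dc _ Hx.
  have /andP[d0' dlc'] := dc _ Hy.
  move: d0 dlc d0' dlc' => /= d0 dlc d0' dlc'.
  have cq := ltn_ord c; have cq' := ltn_ord c'.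
  have ha : q - c < q by lia.
  have ha' : q - c' < q by lia.
  have hb : q - c + d - 1 < q by lia.
  have hb' : q - c' + d' - 1 < q by lia.
  have m1 : Ordinal ha \in f (c', d') by rewrite -fe inE /=; apply/andP; split; lia.
  have m2 : Ordinal ha' \in f (c, d) by rewrite fe inE /=; apply/andP; split; lia.
  rewrite inE /= in m1; rewrite inE /= in m2.
  have ecc : c = c' :> nat by lia.
  have m3 : Ordinal hb \in f (c', d') by rewrite -fe inE /=; apply/andP; split; lia.
  have m4 : Ordinal hb' \in f (c, d) by rewrite fe inE /=; apply/andP; split; lia.
  rewrite inE /= in m3; rewrite inE /= in m4.
  have edd : d = d' :> nat by lia.
  by congr pair; apply: val_inj.
rewrite -(card_in_imset inj); apply: subset_leq_card.
apply/subsetP => L /imsetP [x Px ->]; rewrite inE.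
have /andP[d0 dlc] := dc _ Px.
have Qx : Qb p x.1 x.2 by move: Px; rewrite inE => /andP[].
have cq := ltn_ord x.1.
rewrite ival_interval ?d0 ?dlc //=.
by apply: ival_good; rewrite ?d0 ?dlc.
Qed.

Lemma cnt_le p k : prime p -> cnt p k <=
  \sum_(0 <= c < p ^ k) \sum_(0 <= d < p ^ k) (Qb p c d && (0 < d) : nat) + p ^ k.
Proof.
move=> pp.
have q0 : 0 < p ^ k by rewrite expn_gt0 prime_gt0.
rewrite /cnt.
apply: (@leq_trans (\sum_(0 <= c < p ^ k) (\sum_(0 <= d < p ^ k) (Qb p c d && (0 < d) : nat) + 1))); last first.
  by rewrite big_split /= sum_nat_const_nat subn0 muln1.
apply: leq_sum => c _.
rewrite !(big_ltn q0) /= andbF add0n.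
rewrite (eq_big_nat _ _ (F1 := fun d => (Qb p c d && (0 < d) : nat)) (F2 := fun d => Qb p c d)); last first.
  by move=> d /andP[d1 _]; rewrite d1 andbT.
by rewrite addnC leq_add2l leq_b1.
Qed.

Theorem mainTheorem13 (n p k : nat) :
  0 < n -> prime p -> 2 <= k ->
  (((p ^ k * (p - 1) ^ k)%:R / (2 ^ k)%:R - (p ^ k)%:R : rat)
     <= (#|[set L : {set 'I_(p ^ k)} | is_interval_in L && good_bound n L]|)%:R)%R.
Proof.
move=> n0 pp _.
set G := #|[set L : {set 'I_(p ^ k)} | is_interval_in L && good_bound n L]|.
have key : 'C(p, 2) ^ k <= G + p ^ k.
  apply: leq_trans (cnt_lb k pp) _; apply: leq_trans (cnt_le k pp) _.
  by rewrite leq_add2r count_P.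
have e2 : p ^ k * (p - 1) ^ k = 'C(p, 2) ^ k * 2 ^ k.
  rewrite -!expnMn; congr (_ ^ k).
  by rewrite [RHS]mulnC (mul_bin_left p 1) bin1 mulnC.
rewrite e2 natrM mulfK; last by rewrite pnatr_eq0 expn_eq0.
by rewrite lerBlDr -natrD ler_nat.
Qed.
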